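(* Let $X$ be a Lorentzian pre-length space with timelike curvature bounded above by $0$ globally. Then $X$ is Ptolemaic, i.e. for all $x\le y\le z\le w$ in $X$, $$\ell(x,z)\,\ell(y,w)\ \ge\ \ell(x,y)\,\ell(z,w)+\ell(x,w)\,\ell(y,z).$$
   Context: A Lorentzian pre-length space $(X,d,\ll,\le,\ell)$: $(X,d)$ a metric space, $\le$ reflexive and transitive, $\ll$ transitive and contained in $\le$, $\ell:X\times X\to[0,\infty]$ with $\ell(x,z)\ge\ell(x,y)+\ell(y,z)$ whenever $x\le y\le z$, and $\ell(x,y)>0$ iff $x\ll y$. Maximising geodesic from $x\le y$: a curve $\gamma$ from $x$ to $y$, monotone for $\le$, with $\ell(\gamma(s),\gamma(u))=\ell(\gamma(s),\gamma(t))+\ell(\gamma(t),\gamma(u))$ for $s\le t\le u$. Timelike curvature bounded above by $0$ globally: (i) $\ell$ is finite and continuous on $X\times X$; (ii) any $x\ll y$ are joined by a maximising geodesic; (iii) for every timelike triangle $\Delta(x,y,z)$ ($x\ll y\ll z$ with maximising geodesics as sides) and any points $p,q$ on its sides, $\ell(p,q)\ge\ell(\bar p,\bar q)$, where $\bar p,\bar q$ are the corresponding points (same $\ell$-distances from the endpoints of their side) on a triangle in the Minkowski plane $\mathbb R^{1,1}$ with the same side lengths. *)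

(* Defs.v *)
From Stdlib Require Import Reals.
From Coquelicot Require Import Coquelicot.
Open Scope R_scope.

Section LPLS.
Context {X : Type}.

Definition is_metric (d : X -> X -> R) : Prop :=
  (forall x y, 0 <= d x y) /\
  (forall x y, d x y = 0 <-> x = y) /\
  (forall x y, d x y = d y x) /\
  (forall x y z, d x z <= d x y + d y z).

Definition is_LPLS (d : X -> X -> R) (le ll : X -> X -> Prop)
    (l : X -> X -> Rbar) : Prop :=
  is_metric d /\
  (forall x, le x x) /\
  (forall x y z, le x y -> le y z -> le x z) /\
  (forall x y z, ll x y -> ll y z -> ll x z) /\
  (forall x y, ll x y -> le x y) /\
  (forall x y, Rbar_le 0 (l x y)) /\
  (forall x y z, le x y -> le y z ->
      Rbar_le (Rbar_plus (l x y) (l y z)) (l x z)) /\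
  (forall x y, Rbar_lt 0 (l x y) <-> ll x y).

Definition curve_cont (d : X -> X -> R) (g : R -> X) : Prop :=
  forall t, 0 <= t <= 1 -> forall eps, 0 < eps -> exists delta, 0 < delta /\
    forall s, 0 <= s <= 1 -> Rabs (s - t) < delta -> d (g s) (g t) < eps.

Definition max_geod (d : X -> X -> R) (le : X -> X -> Prop)
    (l : X -> X -> Rbar) (x y : X) (g : R -> X) : Prop :=
  curve_cont d g /\ g 0 = x /\ g 1 = y /\
  (forall s t, 0 <= s -> s <= t -> t <= 1 -> le (g s) (g t)) /\
  (forall s t u, 0 <= s -> s <= t -> t <= u -> u <= 1 ->
     l (g s) (g u) = Rbar_plus (l (g s) (g t)) (l (g t) (g u))).

End LPLS.

(** Minkowski plane R^{1,1}: points (t, x); time separation tau. *)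
Definition mtau (p q : R * R) : R :=
  let dt := fst q - fst p in
  let dx := snd q - snd p in
  if Rle_dec (Rabs dx) dt then sqrt (dt * dt - dx * dx) else 0.

Definition on_segment (ab bb pb : R * R) : Prop :=
  exists lam, 0 <= lam <= 1 /\
    pb = ((1 - lam) * fst ab + lam * fst bb, (1 - lam) * snd ab + lam * snd bb).

Section Comparison.
Context {X : Type}.

Definition corr_pt (l : X -> X -> Rbar) (a b : X) (g : R -> X)
    (ab bb : R * R) (p : X) (pb : R * R) : Prop :=
  (exists s, 0 <= s <= 1 /\ p = g s) /\
  on_segment ab bb pb /\
  mtau ab pb = real (l a p) /\ mtau pb bb = real (l p b).

Definition corr_pt_tri (l : X -> X -> Rbar) (x y z : X)
    (gxy gyz gxz : R -> X) (xb yb zb : R * R) (p : X) (pb : R * R) : Prop :=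
  corr_pt l x y gxy xb yb p pb \/
  corr_pt l y z gyz yb zb p pb \/
  corr_pt l x z gxz xb zb p pb.

Definition tl_curv_le0_global (d : X -> X -> R) (le ll : X -> X -> Prop)
    (l : X -> X -> Rbar) : Prop :=
  (forall x y, is_finite (l x y)) /\
  (forall x y eps, 0 < eps -> exists delta, 0 < delta /\
     forall x' y', d x x' < delta -> d y y' < delta ->
       Rabs (real (l x' y') - real (l x y)) < eps) /\
  (forall x y, ll x y -> exists g, max_geod d le l x y g) /\
  (forall x y z (gxy gyz gxz : R -> X),
     ll x y -> ll y z ->
     max_geod d le l x y gxy -> max_geod d le l y z gyz ->
     max_geod d le l x z gxz ->
     forall xb yb zb : R * R,
       mtau xb yb = real (l x y) -> mtau yb zb = real (l y z) ->
       mtau xb zb = real (l x z) ->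
       forall p pb q qb,
         corr_pt_tri l x y z gxy gyz gxz xb yb zb p pb ->
         corr_pt_tri l x y z gxy gyz gxz xb yb zb q qb ->
         Rbar_le (mtau pb qb) (l p q)).

End Comparison.

(* Main.v *)
Require Import Defs.
From Stdlib Require Import Reals Lra Psatz.
From Coquelicot Require Import Coquelicot.
Open Scope R_scope.

Lemma le_sqrt A B : 0 <= A -> A*A <= B -> A <= sqrt B.
Proof. intros. rewrite <- (sqrt_square A) by lra. apply sqrt_le_1_alt. lra. Qed.

Lemma sqrt_cs u v s t : 0<=u -> 0<=v -> 0<=s -> 0<=t ->
  sqrt(u*v) + sqrt(s*t) <= sqrt((u+s)*(v+t)).
Proof.
  intros Hu Hv Hs Ht.
  rewrite (sqrt_mult u v), (sqrt_mult s t) by lra.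
  pose proof (sqrt_pos u); pose proof (sqrt_pos v); pose proof (sqrt_pos s); pose proof (sqrt_pos t).
  pose proof (sqrt_sqrt u Hu); pose proof (sqrt_sqrt v Hv); pose proof (sqrt_sqrt s Hs); pose proof (sqrt_sqrt t Ht).
  apply le_sqrt. nra.
  set (a := sqrt u) in *; set (b := sqrt v) in *; set (c := sqrt s) in *; set (d := sqrt t) in *.
  rewrite <- H3, <- H4, <- H5, <- H6. pose proof (pow2_ge_0 (a*d - c*b)). nra.
Qed.

Lemma sqrt_amgm u v : 0<=u -> 0<=v -> sqrt(u*v) <= (u+v)/2.
Proof.
  intros Hu Hv. rewrite sqrt_mult by lra.
  pose proof (sqrt_pos u); pose proof (sqrt_pos v).
  pose proof (sqrt_sqrt u Hu); pose proof (sqrt_sqrt v Hv).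
  set (a := sqrt u) in *; set (b := sqrt v) in *. rewrite <- H1, <- H2.
  pose proof (pow2_ge_0 (a - b)). nra.
Qed.

Lemma sqrt_collin x x' y y' : 0<=x -> 0<=x' -> 0<=y -> 0<=y' -> x*y' = x'*y ->
  sqrt(x*x') + sqrt(y*y') = sqrt((x+y)*(x'+y')).
Proof.
  intros H1 H2 H3 H4 E.
  assert (E2 : sqrt x * sqrt y' = sqrt x' * sqrt y).
  { rewrite <- !sqrt_mult by lra. now rewrite E. }
  rewrite (sqrt_mult x x'), (sqrt_mult y y') by lra.
  pose proof (sqrt_pos x); pose proof (sqrt_pos x'); pose proof (sqrt_pos y); pose proof (sqrt_pos y').
  pose proof (sqrt_sqrt x H1) as Q1; pose proof (sqrt_sqrt x' H2) as Q2;
  pose proof (sqrt_sqrt y H3) as Q3; pose proof (sqrt_sqrt y' H4) as Q4.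
  rewrite <- (sqrt_square (sqrt x * sqrt x' + sqrt y * sqrt y')) by nra.
  f_equal.
  set (a := sqrt x) in *; set (b := sqrt x') in *; set (c := sqrt y) in *; set (d := sqrt y') in *.
  rewrite <- Q1, <- Q2, <- Q3, <- Q4. nra.
Qed.
Lemma alg_core e P P' Q Q' f :
  0 < P' -> P' <= P -> 0 < Q' -> Q' <= Q -> Q <= e ->
  (forall dl, 0 <= dl < Q' -> sqrt((Q-dl)*(Q'-dl)) + sqrt((P+dl)*(P'+dl)) <= f) ->
  sqrt((e-Q)*(e-Q')) * sqrt(P*P') + sqrt((e+P)*(e+P')) * sqrt(Q*Q') <= e*f.
Proof.
  intros HP' HP HQ' HQ HQe Hf.
  pose proof (sqrt_amgm (e-Q) (e-Q') ltac:(lra) ltac:(lra)) as Ha.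
  pose proof (sqrt_amgm (e+P) (e+P') ltac:(lra) ltac:(lra)) as Hg.
  pose proof (sqrt_sqrt (Q*Q') ltac:(nra)) as Hb2.
  pose proof (sqrt_sqrt (P*P') ltac:(nra)) as Hc2.
  pose proof (sqrt_pos (Q*Q')) as Hb0. pose proof (sqrt_pos (P*P')) as Hc0.
  pose proof (sqrt_pos ((e-Q)*(e-Q'))) as Ha0. pose proof (sqrt_pos ((e+P)*(e+P'))) as Hg0.
  set (b := sqrt (Q*Q')) in *. set (c := sqrt (P*P')) in *.
  set (a := sqrt ((e-Q)*(e-Q'))) in *. set (g := sqrt ((e+P)*(e+P'))) in *.
  destruct (Rle_dec (b*(P+P')) (c*(Q+Q'))) as [HI|HII].
  - assert (Hf0 := Hf 0 ltac:(lra)).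
    replace (Q-0) with Q in Hf0 by ring. replace (Q'-0) with Q' in Hf0 by ring.
    replace (P+0) with P in Hf0 by ring. replace (P'+0) with P' in Hf0 by ring.
    fold b c in Hf0.
    assert (a*c <= (e-Q+(e-Q'))/2*c) by (apply Rmult_le_compat_r; lra).
    assert (g*b <= (e+P+(e+P'))/2*b) by (apply Rmult_le_compat_r; lra).
    assert (e*(b+c) <= e*f) by (apply Rmult_le_compat_l; lra).
    nra.
  - apply Rnot_le_lt in HII.
    assert (Hcross : P'*Q <= P*Q').
    { destruct (Rle_dec (P'*Q) (P*Q')) as [h|h]; [exact h|exfalso].
      apply Rnot_le_lt in h.
      assert (X : (c*(Q+Q'))*(c*(Q+Q')) - (b*(P+P'))*(b*(P+P')) = (P'*Q-P*Q')*(P*Q-P'*Q')).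
      { transitivity ((c*c)*(Q+Q')*(Q+Q') - (b*b)*(P+P')*(P+P')). ring.
        rewrite Hb2, Hc2. ring. }
      assert (0 <= (P'*Q-P*Q')*(P*Q-P'*Q')) by (apply Rmult_le_pos; nra).
      assert (0 <= c*(Q+Q')) by (apply Rmult_le_pos; lra).
      set (u := b*(P+P')) in *. set (v := c*(Q+Q')) in *.
      assert (v*v < u*u) by (apply Rmult_le_0_lt_compat; lra).
      lra. }
    assert (Hden : 0 < P+Q-P'-Q').
    { destruct (Rlt_dec 0 (P+Q-P'-Q')) as [h|h]; [exact h|exfalso].
      assert (P = P') by lra. assert (Q = Q') by lra. subst P Q.
      unfold b, c in HII. rewrite !sqrt_square in HII by lra. lra. }
    set (den := P+Q-P'-Q') in *.
    set (dc := (P*Q' - P'*Q)/den).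
    assert (Hdc : dc * den = P*Q' - P'*Q) by (unfold dc; field; lra).
    assert (Hdc0 : 0 <= dc) by nra.
    assert (HdcQ : dc <= Q') by (unfold den in *; nra).
    set (W := sqrt((P+Q)*(P'+Q'))).
    assert (HW : sqrt((Q-dc)*(Q'-dc)) + sqrt((P+dc)*(P'+dc)) = W).
    { rewrite sqrt_collin by (unfold den in *; nra).
      unfold W. f_equal. ring. }
    assert (HfW : W <= f).
    { destruct (Rlt_dec dc Q') as [h|h].
      - rewrite <- HW. apply Hf. lra.
      - assert (E : dc = Q') by lra.
        destruct (Rle_dec W f) as [h2|h2]; [exact h2|exfalso]. apply Rnot_le_lt in h2.
        assert (Hc : continuity_pt (fun d => sqrt((Q-d)*(Q'-d)) + sqrt((P+d)*(P'+d))) dc).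
        { change (continuity_pt ((comp sqrt (fun d => ((Q-d)*(Q'-d))%R)) + (comp sqrt (fun d => ((P+d)*(P'+d))%R)))%F dc).
          apply continuity_pt_plus; (apply continuity_pt_comp; [reg | apply continuity_pt_sqrt; unfold den in *; nra]). }
        unfold continuity_pt, continue_in, limit1_in, limit_in in Hc.
        destruct (Hc (W - f) ltac:(lra)) as [alp [Halp Hal]].
        set (d0 := Rmax 0 (dc - alp/2)).
        assert (Hd0 : 0 <= d0 /\ d0 < dc /\ Rabs (d0 - dc) < alp).
        { unfold d0, Rmax. destruct (Rle_dec 0 (dc - alp/2)).
          - split; [lra|split;[lra|]]. apply Rabs_def1; lra.
          - split; [lra|split;[lra|]]. apply Rabs_def1; lra. }
        specialize (Hal d0). simpl in Hal. unfold R_dist, D_x, no_cond in Hal.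
        destruct Hd0 as [H1 [H2 H3]].
        specialize (Hal ltac:(split; [split; [exact I| lra] | exact H3])).
        rewrite HW in Hal. apply Rabs_def2 in Hal.
        specialize (Hf d0 ltac:(lra)). lra. }
    assert (HK : a*c + g*b <= e*W).
    { unfold a, c, g, b. rewrite <- !sqrt_mult by nra.
      replace ((e - Q) * (e - Q') * (P * P')) with (((e-Q)*P)*((e-Q')*P')) by ring.
      replace ((e + P) * (e + P') * (Q * Q')) with (((e+P)*Q)*((e+P')*Q')) by ring.
      eapply Rle_trans. apply sqrt_cs; nra.
      replace ((e - Q) * P + (e + P) * Q) with (e*(P+Q)) by ring.
      replace ((e - Q') * P' + (e + P') * Q') with (e*(P'+Q')) by ring.
      replace (e * (P + Q) * (e * (P' + Q'))) with ((e*e)*((P+Q)*(P'+Q'))) by ring.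
      rewrite sqrt_mult by nra. rewrite sqrt_square by lra. right; reflexivity. }
    assert (e*W <= e*f) by (apply Rmult_le_compat_l; lra).
    lra.
Qed.
Lemma lfin {X} (d : X -> X -> R) le ll l :
  tl_curv_le0_global d le ll l -> forall p q, l p q = Finite (real (l p q)).
Proof. intros [Hf _] p q. symmetry. apply Hf. Qed.

Lemma lnn {X} (d : X -> X -> R) le ll l :
  is_LPLS d le ll l -> tl_curv_le0_global d le ll l -> forall p q, 0 <= real (l p q).
Proof.
  intros HX Hc p q. destruct HX as [_ [_ [_ [_ [_ [H0 _]]]]]].
  specialize (H0 p q). rewrite (lfin d le ll l Hc p q) in H0. exact H0.
Qed.

Lemma lrev {X} (d : X -> X -> R) le ll l :
  is_LPLS d le ll l -> tl_curv_le0_global d le ll l -> forall p q r,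
  le p q -> le q r -> real (l p q) + real (l q r) <= real (l p r).
Proof.
  intros HX Hc p q r H1 H2. destruct HX as [_ [_ [_ [_ [_ [_ [Hr _]]]]]]].
  specialize (Hr p q r H1 H2).
  rewrite (lfin d le ll l Hc p q), (lfin d le ll l Hc q r), (lfin d le ll l Hc p r) in Hr.
  exact Hr.
Qed.

Lemma lrefl {X} (d : X -> X -> R) le ll l :
  is_LPLS d le ll l -> tl_curv_le0_global d le ll l -> forall p, real (l p p) = 0.
Proof.
  intros HX Hc p. pose proof (lnn d le ll l HX Hc p p).
  assert (le p p) by (destruct HX as [_ [Hr _]]; apply Hr).
  pose proof (lrev d le ll l HX Hc p p p H0 H0). lra.
Qed.

Lemma llpos {X} (d : X -> X -> R) le ll l :
  is_LPLS d le ll l -> tl_curv_le0_global d le ll l -> forall p q,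
  ll p q <-> 0 < real (l p q).
Proof.
  intros HX Hc p q. destruct HX as [_ [_ [_ [_ [_ [_ [_ Hp]]]]]]].
  rewrite <- Hp. rewrite (lfin d le ll l Hc p q). simpl. tauto.
Qed.

Lemma geod_facts {X} (d : X -> X -> R) le ll l u v g s :
  is_LPLS d le ll l -> tl_curv_le0_global d le ll l -> max_geod d le l u v g ->
  0 <= s <= 1 ->
  le u (g s) /\ le (g s) v /\ real (l u v) = real (l u (g s)) + real (l (g s) v).
Proof.
  intros HX Hc [_ [H0 [H1 [Hm Ha]]]] Hs.
  split; [| split].
  - rewrite <- H0. apply Hm; lra.
  - rewrite <- H1. apply Hm; lra.
  - specialize (Ha 0 s 1 ltac:(lra) ltac:(lra) ltac:(lra) ltac:(lra)).
    rewrite H0, H1 in Ha.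
    rewrite (lfin d le ll l Hc u v), (lfin d le ll l Hc u (g s)), (lfin d le ll l Hc (g s) v) in Ha.
    simpl in Ha. injection Ha. auto.
Qed.

Definition clamp (s : R) := Rmax 0 (Rmin 1 s).

Lemma clamp_in s : 0 <= clamp s <= 1.
Proof. unfold clamp, Rmax, Rmin. destruct (Rle_dec s 1); repeat destruct Rle_dec; lra. Qed.

Lemma clamp_lip s t : Rabs (clamp s - clamp t) <= Rabs (s - t).
Proof.
  unfold clamp, Rmax, Rmin.
  destruct (Rle_dec s 1); destruct (Rle_dec t 1); repeat destruct Rle_dec.
  all: unfold Rabs; repeat destruct Rcase_abs; try lra.
Qed.

Lemma geod_ivt {X} (d : X -> X -> R) le ll l u v g t0 :
  is_LPLS d le ll l -> tl_curv_le0_global d le ll l -> max_geod d le l u v g ->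
  0 <= t0 <= real (l u v) ->
  exists s, 0 <= s <= 1 /\ real (l u (g s)) = t0.
Proof.
  intros HX Hc Hg Ht.
  set (phi := fun s => real (l u (g (clamp s))) - t0).
  assert (Hcont : continuity phi).
  { intros s0. unfold continuity_pt, continue_in, limit1_in, limit_in.
    intros eps Heps.
    destruct Hc as [_ [Hlc _]].
    destruct (Hlc u (g (clamp s0)) eps Heps) as [d1 [Hd1 Hd1']].
    destruct Hg as [Hgc _].
    destruct (Hgc (clamp s0) (clamp_in s0) d1 Hd1) as [d2 [Hd2 Hd2']].
    exists d2. split; [lra|].
    intros x [_ Hx]. simpl in Hx |- *. unfold R_dist in Hx |- *.
    unfold phi. replace (real (l u (g (clamp x))) - t0 - (real (l u (g (clamp s0))) - t0))
      with (real (l u (g (clamp x))) - real (l u (g (clamp s0)))) by ring.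
    apply Hd1'.
    - destruct HX as [[_ [Hd0 _]] _]. assert (d u u = 0) by (apply Hd0; reflexivity). lra.
    - destruct HX as [[_ [_ [Hsym _]]] _]. rewrite Hsym. apply Hd2'. apply clamp_in.
      pose proof (clamp_lip x s0). lra. }
  destruct (IVT_cor phi 0 1 Hcont ltac:(lra)) as [z [Hz Hz']].
  - unfold phi. assert (E0 : clamp 0 = 0) by (unfold clamp, Rmin, Rmax; repeat destruct Rle_dec; lra).
    assert (E1 : clamp 1 = 1) by (unfold clamp, Rmin, Rmax; repeat destruct Rle_dec; lra).
    rewrite E0, E1. destruct Hg as [_ [H0 [H1 _]]]. rewrite H0, H1.
    rewrite (lrefl d le ll l HX Hc u). nra.
  - exists (clamp z). split; [apply clamp_in|]. unfold phi in Hz'. lra.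
Qed.
Definition pt (n1 n2 : R) : R * R := ((n1+n2)/2, (n1-n2)/2).

Lemma mtau_pt n1 n2 m1 m2 v : n1 <= m1 -> n2 <= m2 -> 0 <= v ->
  (m1-n1)*(m2-n2) = v*v -> mtau (pt n1 n2) (pt m1 m2) = v.
Proof.
  intros H1 H2 Hv E. unfold mtau, pt. simpl.
  destruct Rle_dec as [h|h].
  - rewrite <- (sqrt_square v Hv). f_equal. rewrite <- E. field.
  - exfalso. apply h. apply Rabs_le. lra.
Qed.

Lemma on_seg_pt n1 n2 m1 m2 r1 r2 lam : 0 <= lam <= 1 ->
  r1 = n1 + lam*(m1-n1) -> r2 = n2 + lam*(m2-n2) ->
  on_segment (pt n1 n2) (pt m1 m2) (pt r1 r2).
Proof.
  intros Hl E1 E2. exists lam. split; [exact Hl|]. unfold pt; simpl. subst.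
  f_equal; field.
Qed.

Lemma roots s p : 0 <= p -> 0 <= s -> 4*p <= s*s ->
  exists r1 r2, r1 + r2 = s /\ r1*r2 = p /\ 0 <= r1 <= r2.
Proof.
  intros Hp Hs Hd.
  set (D := sqrt (s*s - 4*p)).
  assert (HD : D*D = s*s-4*p) by (apply sqrt_sqrt; lra).
  assert (HD0 : 0 <= D) by apply sqrt_pos.
  assert (HDs : D <= s) by (rewrite <- (sqrt_square s Hs); apply sqrt_le_1_alt; lra).
  exists ((s-D)/2), ((s+D)/2). split; [field|split;[|split; lra]].
  replace ((s-D)/2*((s+D)/2)) with ((s*s - D*D)/4) by field. rewrite HD. field.
Qed.
Lemma mtau_pt_sqrt n1 n2 m1 m2 X : n1 <= m1 -> n2 <= m2 -> (m1-n1)*(m2-n2) = X ->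
  mtau (pt n1 n2) (pt m1 m2) = sqrt X.
Proof.
  intros H1 H2 E. apply mtau_pt; try lra. apply sqrt_pos.
  rewrite sqrt_sqrt; [exact E|]. rewrite <- E. apply Rmult_le_pos; lra.
Qed.

Lemma core {X} (d : X -> X -> R) le ll l (HX : is_LPLS d le ll l)
  (Hc : tl_curv_le0_global d le ll l) x y z w :
  ll x y -> ll y z -> ll z w ->
  real (l x y) * real (l z w) + real (l x w) * real (l y z) <= real (l x z) * real (l y w).
Proof.
  intros Hxy Hyz Hzw.
  pose proof HX as HX'. destruct HX' as [_ [_ [Hletr [Hlltr [Hllle _]]]]].
  pose proof Hc as Hc'. destruct Hc' as [_ [_ [Hgeo Hcmp]]].
  assert (Hxz : ll x z) by eauto. assert (Hxw : ll x w) by eauto. assert (Hyw : ll y w) by eauto.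
  destruct (Hgeo x y Hxy) as [gxy Gxy]. destruct (Hgeo y z Hyz) as [gyz Gyz].
  destruct (Hgeo x z Hxz) as [gxz Gxz]. destruct (Hgeo z w Hzw) as [gzw Gzw].
  destruct (Hgeo x w Hxw) as [gxw Gxw].
  pose proof (proj1 (llpos d le ll l HX Hc _ _) Hxy) as Ha0.
  pose proof (proj1 (llpos d le ll l HX Hc _ _) Hyz) as Hb0.
  pose proof (proj1 (llpos d le ll l HX Hc _ _) Hzw) as Hc0.
  pose proof (lrev d le ll l HX Hc x y z (Hllle _ _ Hxy) (Hllle _ _ Hyz)) as He.
  pose proof (lrev d le ll l HX Hc x z w (Hllle _ _ Hxz) (Hllle _ _ Hzw)) as Hg.
  pose proof (lrev d le ll l HX Hc y z w (Hllle _ _ Hyz) (Hllle _ _ Hzw)) as Hfb.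
  set (a := real (l x y)) in *. set (b := real (l y z)) in *. set (c := real (l z w)) in *.
  set (e := real (l x z)) in *. set (f := real (l y w)) in *. set (g := real (l x w)) in *.
  assert (He0 : 0 < e) by lra.
  set (s1 := (e*e + b*b - a*a)/e).
  assert (Hs1 : s1*e = e*e+b*b-a*a) by (unfold s1; field; lra).
  assert (Hs1b : 2*b <= s1).
  { assert ((s1 - 2*b)*e = (e-b-a)*(e-b+a)) by nra.
    assert (0 <= (e-b-a)*(e-b+a)) by (apply Rmult_le_pos; lra). nra. }
  destruct (roots s1 (b*b) ltac:(nra) ltac:(lra) ltac:(nra)) as [Q' [Q [HQs [HQp HQ]]]].
  assert (HQ'0 : 0 < Q') by nra.
  assert (EQa : (e-Q)*(e-Q') = a*a).
  { assert (e*(Q'+Q) = e*s1) by (rewrite HQs; ring). clearbody s1. clear -HQs HQp Hs1 H. nra. }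
  assert (HQe : Q <= e).
  { destruct (Rle_dec Q e) as [h|h]; [exact h|exfalso].
    apply Rnot_le_lt in h.
    assert (0 <= b) by lra. assert (b <= e) by lra. assert (b*b <= e*e) by (apply Rmult_le_compat; assumption).
    assert (s1*e <= 2*e*e) by (pose proof (Rle_0_sqr a); unfold Rsqr in *; lra).
    assert (e <= Q').
    { destruct (Rle_dec e Q') as [h2|h2]; [exact h2|exfalso]. apply Rnot_le_lt in h2.
      assert (0 < (Q-e)*(e-Q')) by (apply Rmult_lt_0_compat; lra). nra. }
    assert (2*e < s1) by lra.
    assert (2*e*e < s1*e) by (apply Rmult_lt_compat_r; lra). lra. }
  set (s2 := (g*g - e*e - c*c)/e).
  assert (Hs2 : s2*e = g*g-e*e-c*c) by (unfold s2; field; lra).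
  assert (Hs2c : 2*c <= s2).
  { assert ((s2 - 2*c)*e = (g-e-c)*(g+e+c)) by nra.
    assert (0 <= (g-e-c)*(g+e+c)) by (apply Rmult_le_pos; lra). nra. }
  destruct (roots s2 (c*c) ltac:(nra) ltac:(lra) ltac:(nra)) as [P' [P [HPs [HPp HP]]]].
  assert (HP'0 : 0 < P') by nra.
  assert (EPg : (e+P)*(e+P') = g*g).
  { assert (e*(P'+P) = e*s2) by (rewrite HPs; ring). nra. }
  assert (Main : sqrt((e-Q)*(e-Q')) * sqrt(P*P') + sqrt((e+P)*(e+P')) * sqrt(Q*Q') <= e*f).
  2:{ rewrite EQa, EPg in Main. rewrite (Rmult_comm P P'), (Rmult_comm Q Q'), HPp, HQp in Main.
      rewrite !sqrt_square in Main by lra. lra. }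
  apply alg_core; try lra.
  intros dl Hdl.
  destruct (geod_ivt d le ll l x z gxz (e - dl) HX Hc Gxz ltac:(fold e; lra)) as [s [Hs Hps]].
  destruct (geod_facts d le ll l x z gxz s HX Hc Gxz Hs) as [Hxp [Hpz Hadd]].
  fold e in Hadd.
  set (p := gxz s) in *.
  assert (Hpz' : real (l p z) = dl) by lra.
  set (xb := pt 0 0). set (yb := pt (e-Q) (e-Q')). set (zb := pt e e).
  set (wb := pt (e+P) (e+P')). set (pb := pt (e-dl) (e-dl)).
  assert (Mxy : mtau xb yb = a) by (apply mtau_pt; nra).
  assert (Myz : mtau yb zb = b) by (apply mtau_pt; nra).
  assert (Mxz : mtau xb zb = e) by (apply mtau_pt; nra).
  assert (Mzw : mtau zb wb = c) by (apply mtau_pt; nra).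
  assert (Mxw : mtau xb wb = g) by (apply mtau_pt; nra).
  assert (Myy : mtau yb yb = real (l y y)) by (rewrite (lrefl d le ll l HX Hc); apply mtau_pt; nra).
  assert (Mww : mtau wb wb = real (l w w)) by (rewrite (lrefl d le ll l HX Hc); apply mtau_pt; nra).
  assert (Cp : corr_pt l x z gxz xb zb p pb).
  { split; [exists s; split; [exact Hs | reflexivity]|].
    assert (Hlam : 0 <= (e-dl)/e <= 1).
    { split. apply Rdiv_le_0_compat; lra.
      apply Rmult_le_reg_r with e; [lra|]. unfold Rdiv. rewrite Rmult_assoc, Rinv_l by lra. lra. }
    split; [apply on_seg_pt with ((e-dl)/e); [exact Hlam | field; intro; lra | field; intro; lra]|].
    split; [rewrite Hps; apply mtau_pt; nra | rewrite Hpz'; apply mtau_pt; nra]. }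
  assert (Cy : corr_pt l x y gxy xb yb y yb).
  { split; [exists 1; split; [lra | destruct Gxy as [_ [_ [H1 _]]]; symmetry; exact H1]|].
    split; [apply on_seg_pt with 1; [lra| ring | ring]|].
    split; [exact Mxy | exact Myy]. }
  assert (Cw : corr_pt l z w gzw zb wb w wb).
  { split; [exists 1; split; [lra | destruct Gzw as [_ [_ [H1 _]]]; symmetry; exact H1]|].
    split; [apply on_seg_pt with 1; [lra| ring | ring]|].
    split; [exact Mzw | exact Mww]. }
  assert (C1 := Hcmp x y z gxy gyz gxz Hxy Hyz Gxy Gyz Gxz xb yb zb Mxy Myz Mxz
                 y yb p pb (or_introl Cy) (or_intror (or_intror Cp))).
  assert (C2 := Hcmp x z w gxz gzw gxw Hxz Hzw Gxz Gzw Gxw xb zb wb Mxz Mzw Mxw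
                 p pb w wb (or_introl Cp) (or_intror (or_introl Cw))).
  unfold yb, pb, wb in C1, C2.
  rewrite (mtau_pt_sqrt (e-Q) (e-Q') (e-dl) (e-dl) ((Q-dl)*(Q'-dl))) in C1 by (try ring; lra).
  rewrite (mtau_pt_sqrt (e-dl) (e-dl) (e+P) (e+P') ((P+dl)*(P'+dl))) in C2 by (try ring; lra).
  rewrite (lfin d le ll l Hc) in C1, C2. simpl in C1, C2.
  assert (0 < sqrt ((Q - dl) * (Q' - dl))) by (apply sqrt_lt_R0; nra).
  assert (0 < sqrt ((P + dl) * (P' + dl))) by (apply sqrt_lt_R0; nra).
  assert (Hyp : ll y p) by (apply (llpos d le ll l HX Hc); lra).
  assert (Hpw : ll p w) by (apply (llpos d le ll l HX Hc); lra).
  pose proof (lrev d le ll l HX Hc y p w (Hllle _ _ Hyp) (Hllle _ _ Hpw)). fold f in H1.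
  lra.
Qed.
Theorem proposition4p1 (X : Type) (d : X -> X -> R) (le ll : X -> X -> Prop)
    (l : X -> X -> Rbar)
    (HX : is_LPLS d le ll l) (Hcurv : tl_curv_le0_global d le ll l) :
  forall x y z w : X, le x y -> le y z -> le z w ->
    real (l x z) * real (l y w) >=
      real (l x y) * real (l z w) + real (l x w) * real (l y z).
Proof.
  intros x y z w Hxy Hyz Hzw.
  pose proof HX as HX'. destruct HX' as [_ [_ [Hletr [Hlltr [Hllle _]]]]].
  pose proof Hcurv as Hc'. destruct Hc' as [_ [_ [Hgeo _]]].
  pose proof (lnn d le ll l HX Hcurv) as Hnn.
  pose proof (lrev d le ll l HX Hcurv) as Hrv.
  pose proof (Hrv x y z Hxy Hyz) as He. pose proof (Hrv y z w Hyz Hzw) as Hf.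
  pose proof (Hrv x z w (Hletr _ _ _ Hxy Hyz) Hzw) as Hg.
  pose proof (Hnn x y). pose proof (Hnn y z). pose proof (Hnn z w).
  pose proof (Hnn x z). pose proof (Hnn y w). pose proof (Hnn x w).
  destruct (Rlt_dec 0 (real (l y z))) as [Hb|Hb].
  2:{ assert (Eb : real (l y z) = 0) by lra. rewrite Eb in *.
      assert (real (l x y) * real (l z w) <= real (l x z) * real (l y w))
        by (apply Rmult_le_compat; lra). lra. }
  apply Rle_ge. apply Rnot_lt_le. intro Hcon.
  set (a := real (l x y)) in *. set (b := real (l y z)) in *. set (c := real (l z w)) in *.
  set (e := real (l x z)) in *. set (f := real (l y w)) in *. set (g := real (l x w)) in *.
  set (eta := a*c + g*b - e*f).
  assert (Heta : 0 < eta) by (unfold eta; lra).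
  set (eps := Rmin (b/4) (eta/(4*(g+1)))).
  assert (Heps0 : 0 < eps) by (unfold eps, Rmin; destruct Rle_dec; [lra | apply Rdiv_lt_0_compat; lra]).
  assert (Hepsb : eps <= b/4) by apply Rmin_l.
  assert (Hepsg : eps * (4*(g+1)) <= eta).
  { assert (eps <= eta/(4*(g+1))) by apply Rmin_r.
    apply Rmult_le_compat_r with (r := 4*(g+1)) in H5; [|lra].
    unfold Rdiv in H5. rewrite Rmult_assoc, Rinv_l in H5 by lra. lra. }
  assert (Hyz' : ll y z) by (apply (llpos d le ll l HX Hcurv); exact Hb).
  destruct (Hgeo y z Hyz') as [g1 G1].
  destruct (geod_ivt d le ll l y z g1 eps HX Hcurv G1 ltac:(fold b; lra)) as [s1 [Hs1 E1]].
  destruct (geod_facts d le ll l y z g1 s1 HX Hcurv G1 Hs1) as [Hyy' [Hy'z A1]].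
  set (y' := g1 s1) in *. fold b in A1.
  assert (Hy'z' : ll y' z) by (apply (llpos d le ll l HX Hcurv); lra).
  destruct (Hgeo y' z Hy'z') as [g2 G2].
  destruct (geod_ivt d le ll l y' z g2 (b - 2*eps) HX Hcurv G2 ltac:(lra)) as [s2 [Hs2 E2]].
  destruct (geod_facts d le ll l y' z g2 s2 HX Hcurv G2 Hs2) as [Hy'z2 [Hz2z A2]].
  set (z' := g2 s2) in *.
  assert (Hxy' : le x y') by eauto.
  assert (Hxz' : le x z') by eauto.
  assert (Hy'w : le y' w) by eauto.
  pose proof (Hrv x y y' Hxy Hyy') as B1.
  pose proof (Hrv z' z w Hz2z Hzw) as B2.
  pose proof (Hrv x z' z Hxz' Hz2z) as B3.
  pose proof (Hrv y y' w Hyy' Hy'w) as B4.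
  fold a c e f in B1, B2, B3, B4.
  assert (L1 : ll x y') by (apply (llpos d le ll l HX Hcurv); lra).
  assert (L2 : ll y' z') by (apply (llpos d le ll l HX Hcurv); lra).
  assert (L3 : ll z' w) by (apply (llpos d le ll l HX Hcurv); lra).
  pose proof (core d le ll l HX Hcurv x y' z' w L1 L2 L3) as K.
  rewrite E2 in K.
  pose proof (Hnn x z'). pose proof (Hnn y' w).
  assert (a*c <= real (l x y') * real (l z' w)) by (apply Rmult_le_compat; lra).
  assert (real (l x z') * real (l y' w) <= e*f) by (apply Rmult_le_compat; lra).
  assert (g*(b - 2*eps) >= g*b - eta/2) by nra.
  fold g in K. assert (Eeta : eta = a*c + g*b - e*f) by reflexivity. lra.
Qed.
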